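(* Let $n\ge 2$, $1\le t\le n-1$ and $0<\epsilon\le 1/2$. Consider the $\mathrm{Knapsack}$ instance with $n$ objects, $c_i=v_i=1$ for all $i\in V=[n]$ and capacity $C=2(1-\epsilon)$, with LP relaxation $K=\{x\in[0,1]^n: C-\sum_i x_i\ge 0\}$. Let $\alpha=C/(n+(t-1)(1-\epsilon))$ and define $y\in[0,1]^{\mathcal P_t(V)}$ by $y_\emptyset=1$, $y_{\{i\}}=\alpha$ for all $i\in V$, and $y_I=0$ whenever $|I|>1$. Then $y\in \mathrm{SA}^t(K)$, and $\sum_{i}v_iy_{\{i\}}=n\alpha$ while the optimal integral value is $1$.
   Context: Notation: $\mathcal P(U)$ is the power set of $U$ and $\mathcal P_t(U)$ the set of subsets of $U$ of size at most $t$. For a collection $\mathcal T$ of subsets of $V$ and a vector $y$ indexed by subsets of $V$, $M_{\mathcal T}(y)$ is the symmetric matrix with rows and columns indexed by $\mathcal T$ and $(I,J)$-entry $y_{I\cup J}$. For an affine function $g(x)=b+\sum_{j\in V}a_jx_j$, $g*y$ is the vector with $(g*y)_I=b\,y_I+\sum_{j\in V}a_j\,y_{I\cup\{j\}}$. The $t$-th Sherali-Adams lifted polytope of $K=\{x\in[0,1]^n: g_\ell(x)\ge0,\ \ell=1,\dots,m\}$ (with affine $g_\ell$) is $\mathrm{SA}^t(K)$, the set of $y\in[0,1]^{\mathcal P_t(V)}$ with $y_\emptyset=1$, $M_{\mathcal P(U)}(y)\succeq 0$ for every $U\subseteq V$ with $|U|\le t$, and $M_{\mathcal P(W)}(g_\ell*y)\succeq0$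 for every $\ell$ and every $W\subseteq V$ with $|W|\le t-1$. Here the only constraint is $g(x)=C-\sum_i x_i$. *)

(* Defs.v *)
From HB Require Import structures.
From mathcomp Require Import all_boot all_order all_algebra.
Set Implicit Arguments. Unset Strict Implicit. Unset Printing Implicit Defensive.
Import Order.TTheory GRing.Theory Num.Theory.
Local Open Scope ring_scope.

Definition psd (R : realFieldType) (n : nat) (A : {set {set 'I_n}})
    (M : {set 'I_n} -> {set 'I_n} -> R) : Prop :=
  (forall I J, I \in A -> J \in A -> M I J = M J I) /\
  (forall x : {set 'I_n} -> R,
      0 <= \sum_(I in A) \sum_(J in A) x I * M I J * x J).

Definition momentPSD (R : realFieldType) (n : nat) (y : {set 'I_n} -> R)
    (U : {set 'I_n}) : Prop :=
  psd (powerset U) (fun I J => y (I :|: J)).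

(* g * y for the affine function g(x) = b + sum_j a_j x_j *)
Definition gstar (R : realFieldType) (n : nat) (b : R) (a : 'I_n -> R)
    (y : {set 'I_n} -> R) : {set 'I_n} -> R :=
  fun I => b * y I + \sum_(j : 'I_n) a j * y (I :|: [set j]).

(* t-th Sherali-Adams lifted polytope of K = {x in [0,1]^n : g(x) >= 0}
   for a single affine constraint g(x) = b + sum_j a_j x_j.
   y is a function on all subsets of V; only its values on P_t(V) matter. *)
Definition SA (R : realFieldType) (n t : nat) (b : R) (a : 'I_n -> R)
    (y : {set 'I_n} -> R) : Prop :=
  [/\ (forall I : {set 'I_n}, (#|I| <= t)%N -> 0 <= y I <= 1),
      y set0 = 1,
      (forall U : {set 'I_n}, (#|U| <= t)%N -> momentPSD y U) &
      (forall W : {set 'I_n}, (#|W| <= t.-1)%N -> momentPSD (gstar b a y) W)].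

(* Main.v *)
Require Import Defs.
From HB Require Import structures.
From mathcomp Require Import all_boot all_order all_algebra.
Import Order.TTheory GRing.Theory Num.Theory.
Local Open Scope ring_scope.

Lemma sum_small (R : realFieldType) (n : nat) (U : {set 'I_n}) (F : {set 'I_n} -> R) :
  (forall K : {set 'I_n}, (2 <= #|K|)%N -> F K = 0) ->
  \sum_(I in powerset U) F I = F set0 + \sum_(i in U) F [set i].
Proof.
move=> F0.
rewrite (bigD1 set0) /=; last by rewrite inE sub0set.
congr (_ + _).
rewrite (bigID (fun I : {set 'I_n} => #|I| == 1%N)) /=.
rewrite [X in _ + X]big1 ?addr0; last first.
  move=> K /andP [/andP [_ HK0] HK1]; apply: F0.
  rewrite ltnNge leq_eqVlt negb_or HK1 /= ltnS leqn0 cards_eq0 //.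
rewrite -[RHS]big_imset /=; last by move=> i j _ _ /set1_inj.
apply: eq_bigl => I; apply/idP/imsetP.
  case/andP=> /andP [HU _] /cards1P [i Hi]; exists i => //.
  by move: HU; rewrite Hi powersetE sub1set.
case=> i Hi ->; rewrite powersetE sub1set Hi cards1 andbT /=.
by apply/eqP=> /setP /(_ i); rewrite !inE eqxx.
Qed.

Lemma psd_small (R : realFieldType) (n : nat) (U : {set 'I_n})
   (m : {set 'I_n} -> R) (a b : R) :
  m set0 = a -> (forall i, m [set i] = b) ->
  (forall K : {set 'I_n}, (2 <= #|K|)%N -> m K = 0) ->
  0 <= b -> #|U|%:R * b <= a -> psd (powerset U) (fun I J => m (I :|: J)).
Proof.
move=> ma mb m0 b0 Hab.
split; first by move=> I J _ _; rewrite setUC.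
move=> x.
have inner : forall I, \sum_(J in powerset U) x I * m (I :|: J) * x J
   = x I * m I * x set0 + \sum_(j in U) x I * m (I :|: [set j]) * x [set j].
  move=> I; rewrite sum_small ?setU0 // => K HK.
  by rewrite m0 ?mulr0 ?mul0r // (leq_trans HK) // subset_leq_card // subsetUr.
under eq_bigr => I _ do rewrite inner.
rewrite sum_small; last first.
  move=> K HK; rewrite m0 ?mulr0 ?mul0r ?add0r //.
  by apply: big1 => j _; rewrite m0 ?mulr0 ?mul0r // (leq_trans HK) // subset_leq_card // subsetUl.
rewrite ma.
under eq_bigr => j _ do rewrite (set0U [set j]) mb.
have -> : \sum_(i in U)
    (x [set i] * m [set i] * x set0 +
     \sum_(j in U) x [set i] * m [set i; j] * x [set j]) =
    \sum_(i in U) (x [set i] * b * x set0 + x [set i] * b * x [set i]).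
  apply: eq_bigr => i Hi.
  rewrite mb (bigD1 i) //= setUid mb big1 ?addr0 //.
  move=> j /andP [_ Hji]; rewrite m0 ?mulr0 ?mul0r //.
  by rewrite cards2 eq_sym Hji.
set x0 := x set0.
have E : x0 * a * x0 + \sum_(j in U) x0 * b * x [set j] +
   \sum_(i in U) (x [set i] * b * x0 + x [set i] * b * x [set i])
   = (a - #|U|%:R * b) * (x0 * x0) + \sum_(i in U) b * ((x0 + x [set i]) * (x0 + x [set i])).
  have -> : \sum_(i in U) b * ((x0 + x [set i]) * (x0 + x [set i])) =
     \sum_(i in U) (b * (x0 * x0)) + \sum_(j in U) x0 * b * x [set j] +
     \sum_(i in U) (x [set i] * b * x0 + x [set i] * b * x [set i]).
    rewrite -!big_split /=; apply: eq_bigr => i _.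
    rewrite !mulrDl !mulrDr !mulrA !addrA; congr (_ + _ + _ + _).
    - by rewrite [b * x0]mulrC.
    - by rewrite [b * x [set i]]mulrC -mulrA [b * x0]mulrC mulrA.
    - by rewrite [b * x [set i]]mulrC.
  rewrite sumr_const -mulr_natl mulrBl !addrA mulrA; congr (_ + _ + _).
  by rewrite mulr1 -[b * x0 * x0 *+ _]mulr_natl !mulrA subrK [x0 * a]mulrC.
rewrite E; apply: addr_ge0.
  by apply: mulr_ge0; [rewrite subr_ge0 | rewrite -expr2 sqr_ge0].
apply: sumr_ge0 => i _; apply: mulr_ge0 => //; rewrite -expr2 sqr_ge0 //.
Qed.

Theorem mainTheorem2 (R : realFieldType) (n t : nat) (eps : R) :
  (2 <= n)%N -> (1 <= t <= n.-1)%N -> 0 < eps -> eps <= 1 / 2 ->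
  let C : R := 2 * (1 - eps) in
  let alpha : R := C / (n%:R + (t%:R - 1) * (1 - eps)) in
  let y : {set 'I_n} -> R :=
    fun I => if I == set0 then 1 else if #|I| == 1%N then alpha else 0 in
  SA t C (fun _ => -1) y /\
  \sum_(i : 'I_n) y [set i] = n%:R * alpha /\
  ((exists S : {set 'I_n}, #|S|%:R <= C /\ #|S| = 1%N) /\
   (forall S : {set 'I_n}, #|S|%:R <= C -> (#|S| <= 1)%N)).
Proof.
move=> hn /andP [t1 htn] he0 he1 C alpha y.
have tpos : (0 < t)%N by [].
have htn' : (t.+1 <= n)%N.
  by rewrite -(prednK (ltnW hn)) ltnS.
set e := 1 - eps.
set T : R := (t.-1)%:R.
have hT : t%:R - 1 = T by rewrite /T -{1}(prednK tpos) -addn1 natrD addrK.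
have T0 : 0 <= T by rewrite /T ler0n.
have e1 : e <= 1 by rewrite /e lerBlDr lerDl ltW.
have h12 : 1 / 2 <= e.
  have := lerB (lexx (1:R)) he1.
  by rewrite {1}(splitr (1:R)) addrK.
have e2 : 1 <= C.
  by move: h12; rewrite ler_pdivrMr ?ltr0n // mulrC.
have e0 : 0 < e by apply: lt_le_trans h12; rewrite divr_gt0 ?ltr0n.
have hC : C = 2 * e by [].
set D := n%:R + T * e.
have hal : alpha = C / D by rewrite /alpha hT.
have D0 : 0 < D.
  apply: lt_le_trans (_ : 0 < n%:R) _; first by rewrite ltr0n (ltnW hn).
  by rewrite /D lerDl mulr_ge0 // ltW.
have C0 : 0 <= C by apply: le_trans ler01 e2.
have a0 : 0 <= alpha by rewrite hal divr_ge0 // ltW.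
have aD : alpha * D = C by rewrite hal divfK // gt_eqF.
have A1 : t%:R * alpha <= 1.
  rewrite hal mulrA ler_pdivrMr // mul1r.
  have ident : t%:R * C = t.+1%:R * e + T * e.
    rewrite hC -mulrDl mulrA; congr (_ * e).
    by rewrite -hT -[t.+1%:R]natr1 addrACA subrr addr0 mulr_natr mulr2n.
  rewrite ident /D lerD2r.
  apply: le_trans (_ : t.+1%:R * 1 <= _); first by rewrite ler_wpM2l.
  by rewrite mulr1 ler_nat.
have hz : C - n%:R * alpha = alpha * (T * e).
  by rewrite -{1}aD /D mulrDr [alpha * n%:R]mulrC addrC addKr.
have A2 : T * (alpha * (C - 1)) <= C - n%:R * alpha.
  rewrite hz mulrCA ler_wpM2l // ler_wpM2l // hC lerBlDr.
  by rewrite mulr_natl mulr2n lerD2l.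
have y0 : y set0 = 1 by rewrite /y eqxx.
have y1 : forall i, y [set i] = alpha.
  move=> i; rewrite /y cards1.
  have -> : ([set i] == set0) = false.
    by apply/negbTE/eqP => /setP /(_ i); rewrite !inE eqxx.
  by [].
have y2 : forall K : {set 'I_n}, (2 <= #|K|)%N -> y K = 0.
  move=> K HK; rewrite /y.
  have -> : (K == set0) = false.
    by apply/negbTE; rewrite -cards_eq0 -lt0n (leq_trans _ HK).
  have -> : (#|K| == 1%N) = false by apply/negbTE; rewrite neq_ltn HK orbT.
  by [].
have g0 : gstar C (fun=> -1) y set0 = C - n%:R * alpha.
  rewrite /gstar y0 mulr1.
  have s0U : forall j : 'I_n, set0 :|: [set j] = [set j] by move=> j; apply/setP=> k; rewrite !inE.
  under eq_bigr => j _ do rewrite s0U.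
  under eq_bigr => j _ do rewrite y1.
  rewrite mulNr mul1r sumr_const (_ : #|_| = n) ?card_ord //.
  by rewrite mulNrn mulr_natl.
have g1 : forall i, gstar C (fun=> -1) y [set i] = alpha * (C - 1).
  move=> i; rewrite /gstar y1 (bigD1 i) //= setUid y1 big1 ?addr0.
    by rewrite mulN1r mulrC mulrBr mulr1.
  move=> j Hji; rewrite y2 ?mulr0 //.
  by rewrite cards2 ltnS lt0b eq_sym.
have g2 : forall K : {set 'I_n}, (2 <= #|K|)%N -> gstar C (fun=> -1) y K = 0.
  move=> K HK; rewrite /gstar y2 // mulr0 add0r big1 // => j _.
  by rewrite y2 ?mulr0 // (leq_trans HK) // subset_leq_card // subsetUl.
split; [split | split; [|split]].
- move=> I _; rewrite /y; case: ifP => _; first by rewrite ler01 lexx.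
  case: ifP => _; last by rewrite lexx ler01.
  rewrite a0 /=; apply: le_trans A1.
  by rewrite -{1}(mul1r alpha) ler_wpM2r // ler1n.
- exact: y0.
- move=> U HU; rewrite /momentPSD; eapply psd_small; [exact: y0|exact: y1|exact: y2|exact: a0|].
  by apply: le_trans A1; apply: ler_wpM2r => //; rewrite ler_nat.
- move=> W HW; rewrite /momentPSD; eapply psd_small; [exact: g0|exact: g1|exact: g2| |].
    by rewrite mulr_ge0 // subr_ge0.
  apply: le_trans A2; apply: ler_wpM2r; first by rewrite mulr_ge0 // subr_ge0.
  by rewrite /T ler_nat.
- under eq_bigr do rewrite y1.
  by rewrite sumr_const card_ord mulr_natl.
- by exists [set Ordinal (ltnW hn)]; rewrite cards1.
- move=> S HS.
  have C2 : C < 2.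
    rewrite hC -{2}(mulr1 2) ltr_pM2l ?ltr0n // /e ltrBlDr ltrDl //.
  have : #|S|%:R < 2%:R :> R := le_lt_trans HS C2.
  by rewrite ltr_nat ltnS.
Qed.
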